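(* Let ${\sf S}_2(n,\ell)$ denote the number of $2$-noncrossing RNA structures (RNA secondary structures) on $\{1,\dots,n\}$ with exactly $\ell$ isolated vertices. If $n-\ell$ is a positive even integer, then $$ {\sf S}_2(n,\ell)=\frac{2}{n-\ell}\binom{\frac{n+\ell}{2}}{\frac{n-\ell}{2}+1}\binom{\frac{n+\ell}{2}-1}{\frac{n-\ell}{2}-1}. $$ Furthermore, for all integers $n\ge 2$ and $\ell\ge 0$ (with ${\sf S}_2(m,\ell)=0$ whenever $\ell>m$), $$ (n-\ell)(n-\ell+2)\,{\sf S}_2(n,\ell)-(n+\ell)(n+\ell-2)\,{\sf S}_2(n-2,\ell)=0. $$
   Context: A digraph on $\{1,\dots,n\}$ is a set of arcs $(i,j)$ with $1\le i<j\le n$. A $2$-noncrossing digraph is one in which every vertex lies in at most one arc and there are no two arcs $(i_1,j_1),(i_2,j_2)$ with $i_1<i_2<j_1<j_2$. A vertex is isolated if it lies in no arc. A $2$-noncrossing RNA structure is a $2$-noncrossing digraph with no arc of the form $(i,i+1)$. *)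

(* Defs.v *)
From mathcomp Require Import all_boot all_order all_algebra.
Set Implicit Arguments. Unset Strict Implicit. Unset Printing Implicit Defensive.

(* Vertices {1,...,n} are represented by 'I_n (value i stands for i+1);
   all conditions below are invariant under this shift.
   A digraph is a finite set of arcs (i,j). *)
Definition digraph (n : nat) := {set 'I_n * 'I_n}.

Definition in_arc n (G : digraph n) (v : 'I_n) : bool :=
  [exists a in G, (a.1 == v) || (a.2 == v)].

Definition isolated n (G : digraph n) : {set 'I_n} :=
  [set v | ~~ in_arc G v].

Definition arcs_ordered n (G : digraph n) : bool :=
  [forall a in G, (a.1 < a.2)%N].

Definition at_most_one_arc n (G : digraph n) : bool :=
  [forall v : 'I_n, forall a in G, forall b in G,
     ((a.1 == v) || (a.2 == v)) ==> ((b.1 == v) || (b.2 == v)) ==> (a == b)].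

Definition no_crossing n (G : digraph n) : bool :=
  [forall a in G, forall b in G,
     ~~ [&& (a.1 < b.1)%N, (b.1 < a.2)%N & (a.2 < b.2)%N]].

Definition two_noncrossing n (G : digraph n) : bool :=
  [&& arcs_ordered G, at_most_one_arc G & no_crossing G].

Definition rna_structure n (G : digraph n) : bool :=
  two_noncrossing G && [forall a in G, (a.1).+1 != a.2 :> nat].

Definition S2 (n l : nat) : nat :=
  #|[set G : digraph n | rna_structure G & #|isolated G| == l]|.

(* Main.v *)
Require Import Defs.
From mathcomp Require Import all_boot all_order all_algebra.
From mathcomp Require Import zify ring lra.
Import GRing.Theory Num.Theory.
Set Implicit Arguments. Unset Strict Implicit. Unset Printing Implicit Defensive.

(* Proof strategy:
   (1) combinatorial recurrence (l+1) S2(n+1,l+1) = (n+1) S2(n,l) + (l+1) S2(n-1,l+1)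
       obtained by deleting an isolated vertex (or contracting a hairpin (v-1,v+1));
   (2) S2(n+1,0) = 0;
   (3) the closed form satisfies the same recurrence. *)


Definition touches n (a : 'I_n * 'I_n) (v : 'I_n) := (a.1 == v) || (a.2 == v).

Definition rnaP_prop n (G : digraph n) : Prop :=
  [/\ (forall a, a \in G -> (a.1 < a.2)%N),
      (forall v a b, a \in G -> b \in G -> touches a v -> touches b v -> a = b),
      (forall a b, a \in G -> b \in G -> ~ [/\ (a.1 < b.1)%N, (b.1 < a.2)%N & (a.2 < b.2)%N])
    & (forall a, a \in G -> (a.1).+1 != a.2 :> nat)].

Lemma rnaP n (G : digraph n) : reflect (rnaP_prop G) (rna_structure G).
Proof.
apply: (iffP idP).
- case/andP=> /and3P[/forall_inP H1 /forallP H2 /forall_inP H3] /forall_inP H4.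
  split=> //.
  + move=> v a b aG bG ta tb.
    have := H2 v => /forall_inP /(_ a aG) /forall_inP /(_ b bG).
    by rewrite /touches in ta tb; rewrite ta tb /= => /eqP.
  + move=> a b aG bG [x y z].
    have := H3 a aG => /forall_inP /(_ b bG).
    by rewrite x y z.
- case=> H1 H2 H3 H4; apply/andP; split; last by apply/forall_inP.
  apply/and3P; split.
  + by apply/forall_inP.
  + apply/forallP=> v; apply/forall_inP=> a aG; apply/forall_inP=> b bG.
    apply/implyP=> ta; apply/implyP=> tb; apply/eqP; exact: H2 ta tb.
  + apply/forall_inP=> a aG; apply/forall_inP=> b bG.
    apply/negP=> /and3P[x y z]; exact: (H3 a b aG bG).
Qed.

Lemma isoP n (G : digraph n) v :
  reflect (forall a, a \in G -> ~~ touches a v) (v \in isolated G).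
Proof.
rewrite inE /in_arc; apply: (iffP idP).
- move=> /exists_inPn H a aG; exact: H.
- move=> H; apply/exists_inPn=> a aG; exact: H.
Qed.


Definition tnc n (G : digraph n) : Prop :=
  [/\ (forall a, a \in G -> (a.1 < a.2)%N),
      (forall v a b, a \in G -> b \in G -> touches a v -> touches b v -> a = b)
    & (forall a b, a \in G -> b \in G -> ~ [/\ (a.1 < b.1)%N, (b.1 < a.2)%N & (a.2 < b.2)%N])].

Definition noshort n (G : digraph n) : Prop := forall a, a \in G -> (a.1).+1 != a.2 :> nat.

Lemma rnaE n (G : digraph n) : rna_structure G <-> tnc G /\ noshort G.
Proof.
split; first by move/rnaP=> -[H1 H2 H3 H4].
by case=> -[H1 H2 H3] H4; apply/rnaP.
Qed.

Definition Hm n m (h : 'I_n -> 'I_m) (a : 'I_n * 'I_n) := (h a.1, h a.2).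
Definition img n m (h : 'I_n -> 'I_m) (G : digraph n) : digraph m := [set Hm h a | a in G].

Definition omono n m (h : 'I_n -> 'I_m) := forall x y : 'I_n, (x < y)%N = (h x < h y)%N.

Lemma omono_inj n m (h : 'I_n -> 'I_m) : omono h -> injective h.
Proof.
move=> hm x y E; apply/val_inj/eqP; rewrite eqn_leq.
by apply/andP; split; rewrite leqNgt hm E ltnn.
Qed.

Lemma Hm_inj n m (h : 'I_n -> 'I_m) : omono h -> injective (Hm h).
Proof.
move=> hm [a1 a2] [b1 b2] [] /(omono_inj hm) -> /(omono_inj hm) -> //.
Qed.

Lemma touches_Hm n m (h : 'I_n -> 'I_m) a x : omono h ->
  touches (Hm h a) (h x) = touches a x.
Proof.
move=> hm; rewrite /touches /=.
by rewrite !(inj_eq (omono_inj hm)).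
Qed.

Lemma tnc_img n m (h : 'I_n -> 'I_m) G : omono h -> tnc G -> tnc (img h G).
Proof.
move=> hm [H1 H2 H3]; split.
- move=> _ /imsetP[a aG ->] /=; rewrite -hm; exact: H1.
- move=> v _ _ /imsetP[a aG ->] /imsetP[b bG ->] ta tb.
  have [x E] : exists x, v = h x.
    by move: ta; rewrite /touches /= => /orP[] /eqP <-; eexists.
  subst v; rewrite !touches_Hm // in ta tb.
  by rewrite (H2 x a b).
- move=> _ _ /imsetP[a aG ->] /imsetP[b bG ->] /=; rewrite -!hm; exact: H3.
Qed.

Lemma tnc_sub n (G G' : digraph n) : G \subset G' -> tnc G' -> tnc G.
Proof.
move=> /subsetP s [H1 H2 H3]; split.
- by move=> a /s; exact: H1.
- by move=> v a b /s aG /s bG; exact: H2.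
- by move=> a b /s aG /s bG; exact: H3.
Qed.

Lemma tnc_img_rev n m (h : 'I_n -> 'I_m) G : omono h -> tnc (img h G) -> tnc G.
Proof.
move=> hm [H1 H2 H3]; have mI a : a \in G -> Hm h a \in img h G.
  by move=> aG; apply/imsetP; exists a.
split.
- move=> a /mI /H1 /=; by rewrite -hm.
- move=> v a b /mI aG /mI bG ta tb; apply: (Hm_inj hm).
  by apply: (H2 (h v)); rewrite ?touches_Hm.
- move=> a b /mI aG /mI bG; have := H3 _ _ aG bG; by rewrite /= -!hm.
Qed.

Lemma iso_img n m (h : 'I_n -> 'I_m) G (v : 'I_m) : omono h ->
  (v \in isolated (img h G)) = [forall x, (h x == v) ==> (x \in isolated G)].
Proof.
move=> hm; apply/isoP/forallP.
- move=> H x; apply/implyP=> /eqP E; apply/isoP=> a aG.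
  rewrite -(touches_Hm _ _ hm) E; apply: H; apply/imsetP; exists a => //.
- move=> H _ /imsetP[a aG ->]; apply/negP=> ta.
  have [x E] : exists x, v = h x.
    by move: ta; rewrite /touches /= => /orP[] /eqP <-; eexists.
  move: ta; rewrite E touches_Hm //.
  have := H x; rewrite E eqxx /= => /isoP/(_ a aG)/negP; exact.
Qed.


Definition R n l := [set G : digraph n | rna_structure G & #|isolated G| == l].

Definition bad N (G : digraph N) (v : 'I_N) :=
  [exists a in G, ((a.1).+1 == v :> nat) && (a.2 == v.+1 :> nat)].

Lemma omono_lift n (v : 'I_n.+1) : omono (lift v).
Proof. move=> x y; rewrite /= /bump. case: leqP => ?; case: leqP => ? /=; apply/idP/idP; lia. Qed.

Definition ins n (v : 'I_n.+1) (G : digraph n) : digraph n.+1 := img (lift v) G.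

Lemma iso_ins n (v : 'I_n.+1) G :
  isolated (ins v G) = v |: [set lift v x | x in isolated G].
Proof.
apply/setP=> u; rewrite /ins iso_img; last exact: omono_lift.
rewrite !inE.
case: (eqVneq u v) => [->|uv] /=.
- by apply/forallP=> x; rewrite eq_sym (negbTE (neq_lift v x)).
- have vu : v != u by rewrite eq_sym.
  have [x -> _] := unlift_some vu.
  rewrite (mem_imset _ _ (@lift_inj _ v)).
  apply/forallP/idP.
  + by move/(_ x); rewrite eqxx.
  + by move=> xi y; apply/implyP => /eqP /lift_inj ->.
Qed.

Lemma card_iso_ins n (v : 'I_n.+1) G : #|isolated (ins v G)| = #|isolated G|.+1.
Proof.
rewrite iso_ins cardsU1 card_imset; last exact: lift_inj.
have -> : v \notin [set lift v x | x in isolated G].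
  by apply/imsetP=> -[x _ /eqP]; rewrite (negbTE (neq_lift v x)).
by [].
Qed.

Lemma noshort_ins n (v : 'I_n.+1) G : noshort G -> noshort (ins v G) /\ ~~ bad (ins v G) v.
Proof.
move=> H; split.
- move=> _ /imsetP[a aG ->] /=; have := H a aG; rewrite /= /bump.
  case: leqP => ?; case: leqP => ? /=; lia.
- apply/exists_inP=> -[_ /imsetP[a aG ->]] /= /andP[]; have := H a aG.
  rewrite /bump; case: leqP => ?; case: leqP => ? /=; lia.
Qed.

Definition pre n (v : 'I_n.+1) (G : digraph n.+1) : digraph n :=
  [set a | Hm (lift v) a \in G].

Lemma ins_pre n (v : 'I_n.+1) (G : digraph n.+1) : v \in isolated G -> ins v (pre v G) = G.
Proof.
move=> /isoP vI; apply/setP=> a'; apply/idP/idP.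
- by move=> /imsetP[a]; rewrite inE => aG ->.
- move=> aG; have := vI _ aG; rewrite /touches negb_or => /andP[n1 n2].
  rewrite eq_sym in n1; rewrite eq_sym in n2.
  have [x1 E1 _] := unlift_some n1.
  have [x2 E2 _] := unlift_some n2.
  apply/imsetP; exists (x1, x2); last by rewrite /Hm /= -E1 -E2; case: (a').
  by rewrite inE /Hm /= -E1 -E2; case: (a') aG.
Qed.

Lemma good_set n l (v : 'I_n.+1) :
  [set G in R n.+1 l.+1 | (v \in isolated G) && ~~ bad G v] = [set ins v G | G in R n l].
Proof.
apply/setP=> G'; rewrite inE; apply/idP/idP.
- move=> /andP[rG' /andP[vI nb]]; move: rG'; rewrite inE => /andP[rG /eqP cG].
  apply/imsetP; exists (pre v G'); last by rewrite ins_pre.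
  have E := ins_pre vI.
  rewrite inE; apply/andP; split; last first.
    by rewrite -E card_iso_ins in cG; case: cG => ->.
  case/rnaE: rG => tG sG; apply/rnaE; split.
    by apply: (tnc_img_rev (omono_lift v)); rewrite /ins in E; rewrite E.
  move=> a; rewrite inE => aG; have := sG _ aG; rewrite /=.
  apply: contra => /eqP e; apply/negP => ne; move/negP: nb; apply.
  move: ne; rewrite /bump; case: leqP => h1; case: leqP => h2 /= ne.
  + apply/eqP; lia.
  + lia.
  + apply/exists_inP; exists (Hm (lift v) a) => //=; rewrite /bump; apply/andP.
    rewrite leqNgt h1 /=.
    case: leqP => h3 /=; [split; apply/eqP; lia | lia].
  + apply/eqP; lia.
- case/imsetP=> G; rewrite inE => /andP[rG /eqP cG] ->.
  have [tG sG] := (@rnaE n G).1 rG.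
  have [s1 s2] := noshort_ins v sG.
  rewrite inE card_iso_ins cG eqxx andbT s2 andbT.
  rewrite iso_ins !inE eqxx /=.

  rewrite andbT; apply/rnaE; split => //; apply: tnc_img => //; exact: omono_lift.
Qed.


Definition ev (w x : nat) := if (x <= w)%N then x else x.+2.

Lemma ev_lt m (w : 'I_m) (x : 'I_m) : (ev w x < m.+2)%N.
Proof. rewrite /ev; case: ifP => _; have := ltn_ord x; lia. Qed.

Definition e m (w : 'I_m) (x : 'I_m) : 'I_m.+2 := Ordinal (ev_lt w x).

Lemma e_val m (w x : 'I_m) : (e w x : nat) = ev w x.
Proof. by []. Qed.

Lemma omono_e m (w : 'I_m) : omono (e w).
Proof. move=> x y; rewrite !e_val /ev; case: ifP => h1; case: ifP => h2; apply/idP/idP; lia. Qed.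

Lemma e_surj m (w : 'I_m) (u : 'I_m.+2) :
  u != w.+1 :> nat -> u != w.+2 :> nat -> exists x, e w x = u.
Proof.
move=> /eqP h1 /eqP h2.
have p : ((if (u <= w)%N then (u : nat) else u - 2) < m)%N.
  have := ltn_ord u; have := ltn_ord w; case: ifP; lia.
exists (Ordinal p); apply: val_inj => /=; rewrite /ev /=.
have [h|h] := boolP (u <= w)%N; first by rewrite h.
have -> : (u - 2 <= w)%N = false by apply/negbTE; lia.
lia.
Qed.

Lemma lt0w m (w : 'I_m) : (w < m.+2)%N.
Proof. have := ltn_ord w; lia. Qed.

Definition hp m (w : 'I_m) : 'I_m.+2 * 'I_m.+2 :=
  (Ordinal (lt0w w), Ordinal (n:=m.+2) (m:=w.+2) (ltn_ord w)).

Definition vw m (w : 'I_m) : 'I_m.+2 := Ordinal (n:=m.+2) (m:=w.+1) (leqW (ltn_ord w)).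

Definition E m (w : 'I_m) (G : digraph m) : digraph m.+2 := img (e w) G :|: [set hp w].

Lemma Hm_ne_hp m (w : 'I_m) a : Hm (e w) a != hp w.
Proof.
apply/eqP => Eq; have := congr1 (fun p => val p.2) Eq; rewrite /= /ev; case: ifP; lia.
Qed.

Lemma mem_E m (w : 'I_m) G a : (Hm (e w) a \in E w G) = (a \in G).
Proof.
rewrite !inE (negbTE (Hm_ne_hp w a)) orbF.
exact: (mem_imset _ _ (Hm_inj (omono_e w))).
Qed.

Lemma E_inj m (w : 'I_m) : injective (E w).
Proof. by move=> G1 G2 Eq; apply/setP=> a; rewrite -!(mem_E w) Eq. Qed.

Lemma memE m (w : 'I_m) G a : a \in E w G ->
  (exists2 x, x \in G & a = Hm (e w) x) \/ a = hp w.
Proof.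
rewrite !inE => /orP[/imsetP[x xG ->]|/eqP ->]; [left; exists x | right] => //.
Qed.

Lemma touchesN n (a : 'I_n * 'I_n) v : touches a v = ((a.1 : nat) == v) || ((a.2 : nat) == v).
Proof. by []. Qed.

Lemma tnc_E m (w : 'I_m) G : tnc G -> w \in isolated G -> tnc (E w G).
Proof.
move=> tG /isoP wI; have [H1 H2 H3] := tnc_img (omono_e w) tG.
have mI x : x \in G -> Hm (e w) x \in img (e w) G.
  by move=> xG; apply/imsetP; exists x.
have nw x : x \in G -> (x.1 != w :> nat) /\ (x.2 != w :> nat).
  by move=> /wI; rewrite touchesN negb_or => /andP.
split.
- move=> a /memE [[x xG ->]|->]; [exact: H1 (mI _ xG) | by rewrite /=].
- move=> v a b /memE [[[x1 x2] xG ->]|->] /memE [[[y1 y2] yG ->]|->].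
  + exact: H2 (mI _ xG) (mI _ yG).
  + rewrite !touchesN /= /ev => t1 t2; exfalso.
    have /= [n1 n2] := nw _ xG; move: t1 t2; case: ifP; case: ifP; lia.
  + rewrite !touchesN /= /ev => t1 t2; exfalso.
    have /= [n1 n2] := nw _ yG; move: t1 t2; case: ifP; case: ifP; lia.
  + by [].
- move=> a b /memE [[[x1 x2] xG ->]|->] /memE [[[y1 y2] yG ->]|->].
  + exact: H3 (mI _ xG) (mI _ yG).
  + have /= [n1 n2] := nw _ xG.
    rewrite /= /ev => -[]; case: ifP; case: ifP; lia.
  + have /= [n1 n2] := nw _ yG.
    rewrite /= /ev => -[]; case: ifP; case: ifP; lia.
  + rewrite /= => -[]; lia.
Qed.

Lemma noshort_E m (w : 'I_m) G : noshort G -> noshort (E w G).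
Proof.
move=> sG a /memE [[[x1 x2] xG ->]|->] /=; last lia.
have := sG _ xG; rewrite /= /ev; case: ifP; case: ifP; lia.
Qed.

Lemma iso_U1 n (A : digraph n) p :
  isolated (A :|: [set p]) = isolated A :&: [set u | ~~ touches p u].
Proof.
apply/setP=> u; rewrite in_setI [X in _ && X]inE; apply/isoP/andP.
- move=> H; split; first by apply/isoP=> a aA; apply: H; rewrite in_setU aA.
  by apply: H; rewrite in_setU in_set1 eqxx orbT.
- case=> /isoP H1 H2 a; rewrite in_setU in_set1 => /orP[/H1 //|/eqP ->//].
Qed.

Lemma iso_E m (w : 'I_m) G : w \in isolated G ->
  isolated (E w G) = vw w |: [set e w x | x in isolated G :\ w].
Proof.
move=> wI; apply/setP=> u; rewrite /E iso_U1 inE iso_img; last exact: omono_e.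
rewrite !inE touchesN /=.
have [->|n1] := eqVneq u (vw w).
  rewrite /=; apply/andP; split; last lia.
  by apply/forallP=> x; apply/implyP=> /eqP/(congr1 val); rewrite /= /ev; case: ifP; lia.
rewrite /=.
have n1' : (u != w.+1 :> nat) by apply: contraNneq n1 => h; apply/eqP; apply: val_inj.
have [u2|n2] := eqVneq (u : nat) w.+2.
  rewrite orbT andbF; apply/esym/negP=> /imsetP[x _ /(congr1 val)].
  rewrite /= /ev; case: ifP; lia.
have [x ex] := e_surj n1' n2.
subst u; rewrite (mem_imset _ _ (omono_inj (omono_e w))) !in_setD1.
have [xw|xw] := eqVneq x w.
  subst x; rewrite /= orbF.
  have -> : (w == e w w :> nat) by rewrite /= /ev leqnn.
  by rewrite andbF.
have xw' : (x : nat) != w := xw.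
rewrite /=.
have -> : (w == e w x :> nat) = false.
  apply/negbTE; move: xw'; rewrite /= /ev; case: ifP; lia.
rewrite orbF /= andbT; apply/forallP/idP.
- by move/(_ x); rewrite eqxx.
- by move=> xi y; apply/implyP=> /eqP /(omono_inj (omono_e w)) ->.
Qed.

Lemma card_iso_E m (w : 'I_m) G : w \in isolated G ->
  #|isolated (E w G)| = #|isolated G|.
Proof.
move=> wI; rewrite iso_E // cardsU1 card_imset; last exact: (omono_inj (omono_e w)).
rewrite (cardsD1 w (isolated G)) wI.
have -> : vw w \notin [set e w x | x in isolated G :\ w].
  apply/imsetP=> -[x _ /(congr1 val)]; rewrite /= /ev; case: ifP; lia.
by [].
Qed.

Lemma hp_in_E m (w : 'I_m) G : hp w \in E w G.
Proof. by rewrite !inE eqxx orbT. Qed.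

Lemma fwd_E m (w : 'I_m) G : rna_structure G -> w \in isolated G ->
  [/\ rna_structure (E w G), vw w \in isolated (E w G), bad (E w G) (vw w)
    & #|isolated (E w G)| = #|isolated G|].
Proof.
move=> /rnaE [tG sG] wI; split.
- by apply/rnaE; split; [exact: tnc_E | exact: noshort_E].
- by rewrite iso_E // !inE eqxx.
- by apply/exists_inP; exists (hp w); rewrite ?hp_in_E //= !eqxx.
- exact: card_iso_E.
Qed.

Definition preE m (w : 'I_m) (G' : digraph m.+2) : digraph m := [set x | Hm (e w) x \in G'].

Lemma bwd_E m (w : 'I_m) (G' : digraph m.+2) : rna_structure G' ->
  vw w \in isolated G' -> bad G' (vw w) ->
  [/\ E w (preE w G') = G', rna_structure (preE w G') & w \in isolated (preE w G')].
Proof.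
move=> /rnaE [[H1 H2 H3] sG] /isoP vI /exists_inP [a aG /andP [/eqP a1 /eqP a2]].
have ahp : a = hp w.
  by case: a aG a1 a2 => a1' a2' /= _ e1 e2; congr pair; apply: val_inj => /=; lia.
subst a.
have tw b : b \in G' -> touches b (hp w).1 -> b = hp w.
  move=> bG tb; apply: (H2 (hp w).1) => //; by rewrite /touches eqxx.
have tw2 b : b \in G' -> touches b (hp w).2 -> b = hp w.
  move=> bG tb; apply: (H2 (hp w).2) => //; by rewrite /touches eqxx orbT.
have EE : E w (preE w G') = G'.
  apply/setP=> b; apply/idP/idP.
  - move/memE => [[x]|->//]; by rewrite inE => xG ->.
  - move=> bG; have [->|bh] := eqVneq b (hp w); first exact: hp_in_E.
    have nv := vI _ bG.
    have nw : ~~ touches b (hp w).1 by apply/negP => /(tw _ bG) /eqP; rewrite (negbTE bh).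
    have nw2 : ~~ touches b (hp w).2 by apply/negP => /(tw2 _ bG) /eqP; rewrite (negbTE bh).
    move: nv nw nw2; rewrite !touchesN /= !negb_or => /andP[p1 p2] /andP[q1 q2] /andP[r1 r2].
    have [x1 ex1] := e_surj p1 r1.
    have [x2 ex2] := e_surj p2 r2.
    have -> : b = Hm (e w) (x1, x2) by rewrite /Hm /= ex1 ex2; case: (b).
    rewrite (mem_E w); rewrite inE /Hm /= ex1 ex2; by case: (b) bG.
have sub : img (e w) (preE w G') \subset G'.
  by rewrite -{2}EE; apply/subsetP=> b bI; rewrite inE bI.
have tG' : tnc (img (e w) (preE w G')).
  apply: tnc_sub sub _; by split.
have nohp x : x \in preE w G' -> ~~ touches (Hm (e w) x) (hp w).1.
  rewrite inE => xG; apply/negP=> /(tw _ _) h; have := h xG.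
  by move=> /eqP; rewrite (negbTE (Hm_ne_hp w x)).
split => //.
- apply/rnaE; split; first exact: tnc_img_rev (omono_e w) tG'.
  move=> [x1 x2] xG; have := nohp _ xG; move: xG; rewrite inE => /sG.
  rewrite touchesN /= /ev; case: ifP; case: ifP; lia.
- apply/isoP => x xG; have := nohp _ xG.
  rewrite !touchesN /= /ev; case: ifP; case: ifP; lia.
Qed.


Lemma bad_set m l (w : 'I_m) :
  [set G' in R m.+2 l.+1 | (vw w \in isolated G') && bad G' (vw w)] =
  [set E w G | G in [set G in R m l.+1 | w \in isolated G]].
Proof.
apply/setP=> G'; rewrite inE; apply/idP/idP.
- move=> /andP[rG' /andP[vI b]]; move: rG'; rewrite inE => /andP[rG /eqP cG].
  have [EE rP wP] := bwd_E rG vI b.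
  apply/imsetP; exists (preE w G') => //.
  rewrite inE wP andbT inE rP /=.
  have [_ _ _ c] := fwd_E rP wP.
  by rewrite -c EE cG.
- case/imsetP=> G; rewrite inE => /andP[rG wI] ->.
  move: rG; rewrite inE => /andP[rG /eqP cG].
  have [r1 r2 r3 r4] := fwd_E rG wI.
  by rewrite inE r1 r4 cG eqxx r2 r3.
Qed.

Lemma card_bad m l (w : 'I_m) :
  #|[set G' in R m.+2 l.+1 | (vw w \in isolated G') && bad G' (vw w)]| =
  #|[set G in R m l.+1 | w \in isolated G]|.
Proof. by rewrite bad_set card_imset //; exact: E_inj. Qed.

Lemma card_good n l (v : 'I_n.+1) :
  #|[set G in R n.+1 l.+1 | (v \in isolated G) && ~~ bad G v]| = #|R n l|.
Proof. by rewrite good_set card_imset //; apply: imset_inj; exact: Hm_inj (omono_lift v). Qed.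

Lemma card_ind (T : finType) (A : {pred T}) : #|A| = \sum_(x : T) (x \in A : nat).
Proof. by rewrite -sum1_card big_mkcond /=; apply: eq_bigr => x _; case: (x \in A). Qed.

Lemma exch n (A : {set digraph n}) (P : digraph n -> 'I_n -> bool) :
  \sum_(G in A) #|[set v | P G v]| = \sum_(v : 'I_n) #|[set G in A | P G v]|.
Proof.
under eq_bigr => G _ do rewrite card_ind.
rewrite exchange_big /=; apply: eq_bigr => v _.
rewrite card_ind big_mkcond /=; apply: eq_bigr => G _.
by rewrite !inE; case: (G \in A).
Qed.

Lemma sum_iso n l : \sum_(G in R n l) #|isolated G| = #|R n l| * l.
Proof.
rewrite -sum_nat_const; apply: eq_bigr => G; rewrite inE => /andP[_ /eqP] //.
Qed.

Lemma bad0 N (G : digraph N) (v : 'I_N) : (v : nat) = 0%N -> bad G v = false.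
Proof. by move=> v0; apply/negbTE/exists_inP => -[a _ /andP[/eqP]]; rewrite v0. Qed.

Lemma badN N (G : digraph N.+1) (v : 'I_N.+1) : (v : nat) = N -> bad G v = false.
Proof.
move=> vN; apply/negbTE/exists_inP => -[a _ /andP[_ /eqP]]; rewrite vN.
by have := ltn_ord a.2; lia.
Qed.

Lemma EqA n l :
  (#|R n.+1 l.+1| * l.+1 = #|R n l| * n.+1 + #|R n.-1 l.+1| * l.+1)%N.
Proof.
rewrite -sum_iso.
have split G : #|isolated G| =
   (#|[set v | (v \in isolated G) && ~~ bad G v]| + #|[set v | (v \in isolated G) && bad G v]|)%N.
  rewrite !card_ind -big_split /=; apply: eq_bigr => v _; rewrite !inE.
  by case: (in_arc G v); case: (bad G v).
under eq_bigr => G _ do rewrite split.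
rewrite big_split /= !exch.
under eq_bigr => v _ do rewrite card_good.
rewrite sum_nat_const card_ord mulnC; congr addn.
case: n => [|m].
  rewrite big_ord1 /=.
  have -> : [set G in R 1 l.+1 | (ord0 \in isolated G) && bad G ord0] = set0.
    by apply/setP => G; rewrite !inE bad0 // andbF andbF.
  rewrite cards0.
  have -> : R 0 l.+1 = set0.
    apply/setP=> G; rewrite !inE; apply/negbTE; rewrite negb_and; apply/orP; right.
    by have := max_card (isolated G); rewrite card_ord; case: #|_|.
  by rewrite cards0.
rewrite big_ord_recl big_ord_recr /=.
have -> : [set G in R m.+2 l.+1 | (ord0 \in isolated G) && bad G ord0] = set0.
  by apply/setP => G; rewrite !inE bad0 // andbF andbF.
have -> : [set G in R m.+2 l.+1 | (lift ord0 ord_max \in isolated G) && bad G (lift ord0 ord_max)] = set0.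
  by apply/setP => G; rewrite !inE badN // andbF andbF.
rewrite !cards0 add0n addn0 -sum_iso exch.
apply: eq_bigr => w _.
have -> : lift ord0 (widen_ord (leqnSn m) w) = vw w by apply: val_inj.
rewrite card_bad; apply: eq_card => G; by rewrite !inE.
Qed.


Lemma R_n0 n : R n.+1 0 = set0.
Proof.
apply/setP=> G; rewrite !inE; apply/negbTE/negP=> /andP[/rnaE [[H1 H2 H3] sG] /eqP c0].
have noiso (u : 'I_n.+1) : exists2 b, b \in G & touches b u.
  have : u \notin isolated G by rewrite (cards0_eq c0) inE.
  by rewrite inE negbK => /exists_inP [b bG tb]; exists b.
have [a0 a0G _] := noiso ord0.
case: (@arg_minnP _ a0 (mem G) (fun a => a.2 - a.1)%N a0G) => -[a1 a2] aG amin.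
have o := H1 _ aG; have s := sG _ aG; rewrite /= in o s.
have up : (a1.+1 < n.+1)%N by have := ltn_ord a2; lia.
have [[b1 b2] bG tb] := noiso (Ordinal up).
have ob := H1 _ bG; have mb := amin _ bG; rewrite /= in ob mb.
move: tb; rewrite touchesN /= => /orP[] /eqP tb.
- have nc := H3 _ _ aG bG; rewrite /= in nc.
  have [e2|ne2] := eqVneq (b2 : nat) a2.
    have : (b1, b2) = (a1, a2).
      apply: (H2 a2) => //; rewrite touchesN /= ?e2 eqxx ?orbT //.
    case=> e1 _; lia.
  apply: nc; split; lia.
- have nc := H3 _ _ bG aG; rewrite /= in nc.
  have [e1|ne1] := eqVneq (b1 : nat) a1.
    have : (b1, b2) = (a1, a2).
      apply: (H2 a1) => //; rewrite touchesN /= ?e1 eqxx //.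
    case=> _ e2; lia.
  apply: nc; split; lia.
Qed.

Local Open Scope ring_scope.

Definition Fk (k l : nat) : rat :=
  if k is k'.+1 then ('C(l + k'.+1, k'.+2))%:R * ('C(l + k', k'))%:R / (k'.+1)%:R else 1.

Lemma solve_r (c d B X : rat) : c != 0 -> c * B = d * X -> B = d / c * X.
Proof. by move=> c0 E; rewrite mulrAC -E mulrC mulrA mulVf // mul1r. Qed.

Lemma nz n : (n.+1)%:R != 0 :> rat.
Proof. by rewrite pnatr_eq0. Qed.

Lemma cast_bin (n m c d : nat) (X : rat) : (c * 'C(n, m) = d)%N -> c != 0%N ->
  ('C(n, m))%:R = d%:R / c%:R :> rat.
Proof.
move=> E c0; apply/eqP; rewrite eq_sym -subr_eq0 -E natrM.
rewrite mulrC mulrA mulVf ?mul1r ?subrr // pnatr_eq0 //.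
Qed.

Lemma FkA l j : (l.+1)%:R * Fk j.+1 l.+1 = (l + 2 * j + 3)%:R * Fk j.+1 l + (l.+1)%:R * Fk j l.+1.
Proof.
case: j => [|i]; rewrite /Fk.
- rewrite muln0 !addnS !addSn !addn0 !bin0.
  have c1 : ('C(l.+2, 2))%:R = (l.+2)%:R / 2%:R * (l.+1)%:R :> rat.
    apply: solve_r; first exact: nz.
    by rewrite -!natrM; congr (_%:R); rewrite -mul_bin_diag bin1.
  have c2 : ('C(l.+1, 2))%:R = (l.+1)%:R / 2%:R * l%:R :> rat.
    apply: solve_r; first exact: nz.
    by rewrite -!natrM; congr (_%:R); rewrite -mul_bin_diag bin1.
  rewrite c1 c2 !mulrS ?natrD ?mulr0n.
  by field.
have -> : (l + 2 * i.+1 + 3 = (l + i + i).+4.+1)%N by lia.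
rewrite !addnS !addSn.
set X := ('C((l + i).+1, i.+1))%:R : rat.
have c1 : ('C((l + i).+2, i.+1))%:R = ((l + i).+2)%:R / (l.+1)%:R * X.
  apply: solve_r; first exact: nz.
  rewrite -!natrM; congr (_%:R); have E := mul_bin_down (l + i).+2 i.+1.
  rewrite /= in E; rewrite E; congr (_ * _)%N; lia.
have c2 : ('C((l + i).+2, i.+2))%:R = ((l + i).+2)%:R / (i.+2)%:R * X.
  apply: solve_r; first exact: nz.
  by rewrite -!natrM; congr (_%:R); rewrite -mul_bin_diag.
have c3 : (('C((l + i).+3, i.+3))%:R : rat) = ((l + i).+3)%:R / (i.+3)%:R * ('C((l + i).+2, i.+2))%:R.
  apply: solve_r; first exact: nz.
  by rewrite -!natrM; congr (_%:R); rewrite -mul_bin_diag.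
have c4 : ('C((l + i).+1, i.+2))%:R = l%:R / (i.+2)%:R * X.
  apply: solve_r; first exact: nz.
  by rewrite -!natrM; congr (_%:R); rewrite mul_bin_left subSS addnK.
have c5 : (('C((l + i).+2, i.+3))%:R : rat) = ((l + i).+2)%:R / (i.+3)%:R * ('C((l + i).+1, i.+2))%:R.
  apply: solve_r; first exact: nz.
  by rewrite -!natrM; congr (_%:R); rewrite -mul_bin_diag.
have c6 : ('C((l + i).+1, i))%:R = (i.+1)%:R / (l.+1)%:R * X.
  apply: solve_r; first exact: nz.
  rewrite -!natrM; congr (_%:R); rewrite mul_bin_left.
  by congr (_ * _)%N; lia.
rewrite c3 c2 c5 c4 c1 c6.
rewrite !mulrS ?natrD ?natrM ?mulr0n.
field.
have hi : (0:rat) <= i%:R by exact: ler0n.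
have hl : (0:rat) <= l%:R by exact: ler0n.
by apply/and4P; split; apply/eqP; lra.
Qed.

Definition F (n l : nat) : rat :=
  if (l <= n)%N && ~~ odd (n - l) then Fk (n - l)./2 l else 0.

Lemma F_lk l k : F (l + k.*2) l = Fk k l.
Proof. by rewrite /F leq_addr addKn odd_double /= doubleK. Qed.

Lemma F_odd l k : F (l + (k.*2).+1) l = 0.
Proof. by rewrite /F leq_addr addKn /= odd_double. Qed.

Lemma F_lt n l : (n < l)%N -> F n l = 0.
Proof. by move=> h; rewrite /F leqNgt h. Qed.

Lemma AlgA n l :
  (l.+1)%:R * F n.+1 l.+1 = (n.+1)%:R * F n l + (l.+1)%:R * F n.-1 l.+1.
Proof.
case: (leqP l n) => ln; last first.
  by rewrite !F_lt ?mulr0 ?addr0 //; lia.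
have := odd_double_half (n - l); set k := (n - l)./2 => hk.
case: (boolP (odd (n - l))) => o; [rewrite o in hk | rewrite (negbTE o) in hk].
- have En : n = (l + (k.*2).+1)%N by lia.
  rewrite En (F_odd l k).
  have -> : ((l + (k.*2).+1).+1 = l.+1 + (k.*2).+1)%N by lia.
  rewrite F_odd.
  case: k {hk En} => [|k].
    by rewrite F_lt ?mulr0 ?addr0 //; lia.
  have -> : ((l + ((k.+1).*2).+1).-1 = l.+1 + (k.*2).+1)%N by rewrite doubleS; lia.
  by rewrite F_odd !mulr0 addr0.
- have En : n = (l + k.*2)%N by lia.
  rewrite En F_lk.
  have -> : ((l + k.*2).+1 = l.+1 + k.*2)%N by lia.
  rewrite F_lk.
  case: k {hk En} => [|j].
    rewrite F_lt /=; last lia.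
    by rewrite addn0 !mulr1 mulr0 addr0.
  have -> : ((l + (j.+1).*2).-1 = l.+1 + j.*2)%N by rewrite doubleS; lia.
  rewrite F_lk FkA; congr (_ * _ + _).
  by congr (_%:R); rewrite doubleS; lia.
Qed.

Lemma FkB l j :
  ((l + (j.+1).*2)%:R - l%:R) * ((l + (j.+1).*2)%:R - l%:R + 2) * Fk j.+1 l =
  ((l + (j.+1).*2)%:R + l%:R) * ((l + (j.+1).*2)%:R + l%:R - 2) * Fk j l.
Proof.
rewrite natrD -muln2 natrM.
have hl : (0:rat) <= l%:R by exact: ler0n.
case: j => [|i]; rewrite /Fk.
- rewrite addn0 bin0.
  have c1 : ('C(l.+1, 2))%:R = (l.+1)%:R / 2%:R * l%:R :> rat.
    apply: solve_r; first exact: nz.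
    by rewrite -!natrM; congr (_%:R); rewrite -mul_bin_diag bin1.
  by rewrite addn1 c1; field.
have hi : (0:rat) <= i%:R by exact: ler0n.
rewrite !addnS.
set Y := ('C(l + i, i))%:R : rat.
have d1 : ('C((l + i).+1, i.+1))%:R = ((l + i).+1)%:R / (i.+1)%:R * Y.
  apply: solve_r; first exact: nz.
  by rewrite -!natrM; congr (_%:R); rewrite -mul_bin_diag.
have d2 : ('C(l + i, i.+1))%:R = l%:R / (i.+1)%:R * Y.
  apply: solve_r; first exact: nz.
  by rewrite -!natrM; congr (_%:R); rewrite mul_bin_left addnK.
have d3 : (('C((l + i).+1, i.+2))%:R : rat) = ((l + i).+1)%:R / (i.+2)%:R * ('C(l + i, i.+1))%:R.
  apply: solve_r; first exact: nz.
  by rewrite -!natrM; congr (_%:R); rewrite -mul_bin_diag.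
have d4 : (('C((l + i).+2, i.+3))%:R : rat) = ((l + i).+2)%:R / (i.+3)%:R * ('C((l + i).+1, i.+2))%:R.
  apply: solve_r; first exact: nz.
  by rewrite -!natrM; congr (_%:R); rewrite -mul_bin_diag.
rewrite d4 d3 d2 d1 !mulrS ?natrD ?mulr0n.
field.
by apply/and3P; split; apply/eqP; lra.
Qed.

Lemma R0S l : R 0 l.+1 = set0.
Proof.
apply/setP=> G; rewrite !inE; apply/negbTE; rewrite negb_and; apply/orP; right.
by have := max_card (isolated G); rewrite card_ord; case: #|_|.
Qed.

Lemma R00 : (#|R 0 0| = 1)%N.
Proof.
have -> : R 0 0 = [set set0].
  apply/setP=> G; rewrite !inE.
  have -> : G = set0 by apply/setP => -[[]].
  rewrite eqxx.
  have -> : #|isolated (set0 : digraph 0)| = 0%N.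
    by have := max_card (isolated (set0 : digraph 0)); rewrite card_ord; case: #|_|.
  rewrite eqxx andbT; apply/rnaE; split; first split.
  - by move=> -[[]].
  - by move=> [].
  - by move=> -[[]].
  - by move=> -[[]].
by rewrite cards1.
Qed.

Lemma F_n0 n : F n.+1 0 = 0%R.
Proof.
have := odd_double_half n.+1; set k := n.+1./2 => hk.
case: (boolP (odd n.+1)) => o; [rewrite o in hk | rewrite (negbTE o) in hk].
- by have := F_odd 0 k; rewrite add0n -hk.
- have := F_lk 0 k; rewrite add0n -hk /= => ->.
  case: k hk => [|j] hk; first by [].
  by rewrite /Fk bin_small ?mul0r // add0n.
Qed.

Lemma main n l : (#|R n l|)%:R = F n l :> rat.
Proof.
elim: l n => [|l IHl] n.
  case: n => [|n]; first by rewrite R00.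
  by rewrite R_n0 cards0 F_n0.
elim/ltn_ind: n => -[|n] IHn.
  by rewrite R0S cards0 F_lt.
have E := EqA n l.
have nz : (l.+1)%:R != 0 :> rat by rewrite pnatr_eq0.
apply: (mulIf nz); rewrite [RHS]mulrC AlgA -IHl.
rewrite -(IHn n.-1); last by case: n {E IHn}.
rewrite -!natrM -natrD; congr (_%:R); rewrite E; lia.
Qed.

Lemma AlgB m l :
  ((m.+2)%:R - l%:R) * ((m.+2)%:R - l%:R + 2) * F m.+2 l =
  ((m.+2)%:R + l%:R) * ((m.+2)%:R + l%:R - 2) * F m l :> rat.
Proof.
case: (leqP l m.+2) => ln; last by rewrite !F_lt ?mulr0 //; lia.
have := odd_double_half (m.+2 - l); set k := (m.+2 - l)./2 => hk.
case: (boolP (odd (m.+2 - l))) => o; [rewrite o in hk | rewrite (negbTE o) in hk].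
- have -> : m.+2 = (l + (k.*2).+1)%N by lia.
  rewrite F_odd mulr0.
  case: k hk => [|k] hk.
    by rewrite F_lt ?mulr0 //; lia.
  have -> : m = (l + (k.*2).+1)%N by move: hk; rewrite doubleS; lia.
  by rewrite F_odd mulr0.
- case: k hk => [|j] hk.
    have E : m.+2 = l by lia.
    have Fm : F m l = 0 by apply: F_lt; lia.
    by rewrite Fm mulr0 E subrr !mul0r.
  have E2 : m.+2 = (l + (j.+1).*2)%N by lia.
  have E1 : m = (l + j.*2)%N by move: hk; rewrite doubleS; lia.
  rewrite E2 F_lk [in RHS]E1 F_lk.
  exact: FkB.
Qed.

Theorem corollary3p2 :
  (forall n l : nat, (0 < n - l)%N -> ~~ odd (n - l) ->
     (S2 n l)%:R =
       (2%:R / (n - l)%:R : rat)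
       * ('C((n + l)./2, ((n - l)./2).+1))%:R
       * ('C(((n + l)./2).-1, ((n - l)./2).-1))%:R)
  /\
  (forall n l : nat, (2 <= n)%N ->
     ((n%:Z - l%:Z) * (n%:Z - l%:Z + 2) * (S2 n l)%:Z
      - (n%:Z + l%:Z) * (n%:Z + l%:Z - 2) * (S2 (n - 2) l)%:Z = 0 :> int)).
Proof.
have SR n l : S2 n l = #|R n l| by [].
split.
- move=> n l h0 he; rewrite SR main.
  have := odd_double_half (n - l); rewrite (negbTE he) add0n.
  set k := (n - l)./2 => hk.
  case: k hk => [|j] hk; first by move: h0; rewrite -hk.
  have -> : n = (l + (j.+1).*2)%N by move: h0 hk; lia.
  rewrite F_lk addKn.
  have -> : (l + (j.+1).*2 + l = (l + j.+1).*2)%N by rewrite !doubleD; lia.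
  rewrite doubleK addnS /= /Fk.
  rewrite -muln2 natrM !addnS.
  field; have := ler0n rat j; lra.
- move=> n l; case: n => [|[|m]] // _.
  apply/eqP; rewrite -(intr_eq0 rat) !(rmorphB, rmorphM, rmorphD) /= -!pmulrn.
  rewrite !SR !main.
  have -> : (m.+2 - 2 = m)%N by lia.
  have -> : (1 + 1 : rat) = 2 by [].
  by rewrite AlgB subrr.
Qed.
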